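(* Let $H$ be a connected $3$-uniform hypergraph on $n$ vertices. Then $|E(H)|\geq \left\lfloor \frac{1}{2}\binom{n}{2}\right\rfloor$. Moreover, this bound is attained: for every $n$ there exists a connected $3$-uniform hypergraph on $n$ vertices with exactly $\left\lfloor \frac{1}{2}\binom{n}{2}\right\rfloor$ edges.
   Context: A strong path in a $3$-uniform hypergraph $H$ is a sequence of edges $E_1,\dots,E_m$ of $H$ with $|E_t\cap E_{t+1}|=2$ for all $t$. $H$ is connected if for any two distinct $2$-subsets $\{u,v\},\{u',v'\}$ of $V(H)$ there is a strong path $E_1,\dots,E_m$ in $H$ with $\{u,v\}\subseteq E_1$ and $\{u',v'\}\subseteq E_m$ (for $n\le 2$ the condition is vacuous). *)

(* Defs.v *)
From mathcomp Require Import all_boot.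
Set Implicit Arguments. Unset Strict Implicit. Unset Printing Implicit Defensive.

Definition uniform3 (T : finType) (E : {set {set T}}) : Prop :=
  forall A, A \in E -> #|A| = 3.

Definition strong_path (T : finType) (E : {set {set T}}) (s : seq {set T}) : bool :=
  all (fun A => A \in E) s && sorted (fun A B => #|A :&: B| == 2) s.

Definition hconnected (T : finType) (E : {set {set T}}) : Prop :=
  forall P Q : {set T}, #|P| = 2 -> #|Q| = 2 -> P != Q ->
    exists (A : {set T}) (s : seq {set T}),
      [/\ strong_path E (A :: s), P \subset A & Q \subset last A s].

(* Main.v *)
Require Import Defs.
From mathcomp Require Import all_boot zify.
Set Implicit Arguments. Unset Strict Implicit. Unset Printing Implicit Defensive.

Definition cov (T : finType) (F : {set {set T}}) :=
  [set P : {set T} | (#|P| == 2) && [exists A in F, P \subset A]].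
Lemma covE (T : finType) (F : {set {set T}}) P :
  (P \in cov F) = (#|P| == 2) && [exists A in F, P \subset A].
Proof. by rewrite inE. Qed.

Lemma pairs_edge (T : finType) (e : {set T}) : #|e| = 3 ->
  #|[set P : {set T} | (#|P| == 2) && (P \subset e)]| <= 3.
Proof.
move=> He; apply: (@leq_trans #|[set e :\ x | x in e]|); last by rewrite -He leq_imset_card.
apply: subset_leq_card; apply/subsetP => P; rewrite inE => /andP[/eqP HP Pe].
have : 0 < #|e :\: P| by rewrite cardsD (setIidPr Pe) He HP.
rewrite card_gt0 => /set0Pn[x]; rewrite inE => /andP[xP xe].
apply/imsetP; exists x => //; apply/eqP; rewrite eqEcard subsetD1 Pe xP /=.
by move: (cardsD1 x e); rewrite xe He HP; lia.
Qed.

Lemma cov_step (T : finType) (F : {set {set T}}) (e P : {set T}) : #|e| = 3 ->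
  P \subset e -> P \in cov F -> #|cov (e |: F)| <= #|cov F| + 2.
Proof.
move=> He Pe PF.
set pe := [set P : {set T} | (#|P| == 2) && (P \subset e)].
have H1 : cov (e |: F) \subset cov F :|: pe.
  apply/subsetP => R; rewrite !covE => /andP[R2 /existsP[A /andP[]]].
  rewrite !inE => /orP[/eqP -> Re|AF RA]; first by rewrite R2 Re orbT.
  by rewrite R2 /=; apply/orP; left; apply/existsP; exists A; rewrite AF.
have H2 : 0 < #|cov F :&: pe|.
  rewrite card_gt0; apply/set0Pn; exists P; rewrite in_setI PF inE Pe andbT.
  by move: PF; rewrite covE => /andP[].
have H3 : #|pe| <= 3 by apply: pairs_edge.
have := cardsUI (cov F) pe.
have := subset_leq_card H1.
lia.
Qed.

Lemma walk (T : finType) (E F : {set {set T}}) (e' Q : {set T}) :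
  e' \in E -> e' \notin F -> Q \subset e' -> #|Q| = 2 ->
  forall s A, all (fun A => A \in E) (A :: s) ->
  path (fun A B => #|A :&: B| == 2) A s ->
  (exists P : {set T}, P \subset A /\ P \in cov F) -> Q \subset last A s ->
  exists e, [/\ e \in E, e \notin F & exists P : {set T}, P \subset e /\ P \in cov F].
Proof.
move=> e'E e'F Qe' HQ; elim=> [|B s IH] A /= /andP[AE Hall] Hp Hgood Hlast.
  case AF: (A \in F); last by exists A; rewrite AF.
  exists e'; split => //; exists Q; split => //.
  by rewrite covE HQ eqxx /=; apply/existsP; exists A; rewrite AF.
case AF: (A \in F); last by exists A; rewrite AF.
move: Hp => /andP[HAB Hp]; move: Hall => /andP[BE Hall].
apply: (IH B) => //=; first by rewrite BE.
exists (A :&: B); split; first exact: subsetIr.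
by rewrite covE HAB /=; apply/existsP; exists A; rewrite AF subsetIl.
Qed.

Lemma pair_in (T : finType) (e : {set T}) : #|e| = 3 -> forall x, x \in e -> #|e :\ x| = 2.
Proof. by move=> He x xe; move: (cardsD1 x e); rewrite xe He; lia. Qed.

Theorem part1 (T : finType) (E : {set {set T}}) :
  uniform3 E -> hconnected E -> 'C(#|T|, 2) %/ 2 <= #|E|.
Proof.
move=> HU HC.
set D := [set P : {set T} | #|P| == 2].
have HD : #|D| = 'C(#|T|, 2) by rewrite card_draws.
case: (leqP 'C(#|T|, 2) 1) => small; first by lia.
have covall : forall P : {set T}, #|P| = 2 -> P \in cov E.
  move=> P HP.
  have : 0 < #|D :\ P| by move: (cardsD1 P D); rewrite HD; lia.
  rewrite card_gt0 => /set0Pn[Q] /setD1P[QP]; rewrite inE => /eqP HQ.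
  have [A [s [/andP[/andP[AE _] _] PA _]]] := HC P Q HP HQ (ltac:(by rewrite eq_sym)).
  by rewrite covE HP eqxx /=; apply/existsP; exists A; rewrite AE.
have [P0 P0D] : exists P0 : {set T}, P0 \in D.
  by apply/set0Pn; rewrite -card_gt0; lia.
have [A0 A0E] : exists A0 : {set T}, A0 \in E.
  move: (covall P0); rewrite inE in P0D; move=> /(_ (eqP P0D)).
  by rewrite covE => /andP[_ /existsP[A /andP[AE _]]]; exists A.
have claim : forall k, 0 < k <= #|E| ->
    exists F : {set {set T}}, [/\ F \subset E, #|F| = k & #|cov F| <= 2 * k + 1].
  elim=> [|k IH] //.
  case: k IH => [_ _|k IH Hk].
    exists [set A0]; split; first by rewrite sub1set.
      by rewrite cards1.
    apply: (leq_trans _ (pairs_edge (HU A0 A0E))); apply: subset_leq_card.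
    apply/subsetP => R; rewrite covE inE => /andP[-> /existsP[A /andP[]]].
    by rewrite inE => /eqP ->.
  have [F [FE HF HcF]] : exists F : {set {set T}}, [/\ F \subset E, #|F| = k.+1 & #|cov F| <= 2 * k.+1 + 1].
    by apply: IH; lia.
  have [e' e'E e'F] : exists2 e', e' \in E & e' \notin F.
    have : 0 < #|E :\: F| by rewrite cardsD (setIidPr FE); lia.
    by rewrite card_gt0 => /set0Pn[x]; rewrite inE => /andP[xF xE]; exists x.
  have [e0 e0F] : exists e0, e0 \in F by apply/set0Pn; rewrite -card_gt0 HF.
  have e0E : e0 \in E by apply: (subsetP FE).
  have [x xe0] : exists x, x \in e0 by apply/set0Pn; rewrite -card_gt0 HU.
  set P := e0 :\ x.
  have HP : #|P| = 2 by apply: pair_in => //; apply: HU.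
  have [y1 y1e] : exists y, y \in e' by apply/set0Pn; rewrite -card_gt0 HU.
  have [y2 y2e] : exists y, y \in e' :\ y1.
    by apply/set0Pn; rewrite -card_gt0 pair_in //; apply: HU.
  have [Q [QP Qe HQ]] : exists Q, [/\ Q != P, Q \subset e' & #|Q| = 2].
    move: y2e; rewrite inE => /andP[y21 y2e'].
    case: (eqVneq (e' :\ y1) P) => H1.
      exists (e' :\ y2); split; [|exact: subD1set|by rewrite pair_in //; apply: HU].
      apply/negP => /eqP H2; move: (eq_refl y2).
      have : y2 \in e' :\ y1 by rewrite inE y21.
      by rewrite H1 -H2 !inE eqxx.
    exists (e' :\ y1); split; [done|exact: subD1set|by rewrite pair_in //; apply: HU].
  have [A [s [/andP[Hall Hp] PA Qlast]]] := HC P Q HP HQ (ltac:(by rewrite eq_sym)).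
  have PF : P \in cov F.
    by rewrite covE HP eqxx /=; apply/existsP; exists e0; rewrite e0F subD1set.
  have [e [eE eF [R [Re RF]]]] := walk e'E e'F Qe HQ Hall Hp (ex_intro _ P (conj PA PF)) Qlast.
  exists (e |: F); split.
  - by rewrite subUset sub1set eE FE.
  - by rewrite cardsU1 eF HF.
  - apply: (leq_trans (cov_step (HU e eE) Re RF)); move: HcF; move: #|cov F| => c; clear; lia.
have [F [FE HF HcF]] := claim #|E| (ltac:(apply/andP; split=> //; rewrite card_gt0; apply/set0Pn; by exists A0)).
have FeqE : F = E by apply/eqP; rewrite eqEcard FE HF leqnn.
rewrite FeqE in HcF.
have : #|D| <= #|cov E|.
  apply: subset_leq_card; apply/subsetP => P; rewrite inE => /eqP HP; exact: covall.
lia.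
Qed.

Definition okt n (t : seq nat) := uniq t && (size t == 3) && all (fun x => x < n) t.
Definition share (a b : seq nat) := count (fun x => x \in b) a == 2.
Definition nlink (L : seq (seq nat)) s t :=
  exists p, [&& path share s p, all (fun x => x \in L) (s :: p) & last s p == t].

Lemma nlink_refl L t : t \in L -> nlink L t t.
Proof. by move=> tL; exists [::]; rewrite /= tL eqxx. Qed.

Lemma nlink_step L s t u : s \in L -> share s t -> nlink L t u -> nlink L s u.
Proof.
move=> sL st [p /and3P[Hp Ha Hl]]; exists (t :: p).
by rewrite /= in Ha; rewrite /= st Hp sL Ha.
Qed.

Lemma nlink_trans L s t u : nlink L s t -> nlink L t u -> nlink L s u.
Proof.
move=> [p /and3P[Hp Ha /eqP Hl]] [q /and3P[Hq Hb Hl2]]; exists (p ++ q).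
rewrite cat_path Hp Hl Hq last_cat Hl Hl2 /=.
move: Ha Hb => /= /andP[-> Ha] /andP[_ Hb]; by rewrite all_cat Ha Hb.
Qed.

Lemma nlink_sub L L' s t : {subset L <= L'} -> nlink L s t -> nlink L' s t.
Proof.
move=> sub [p /and3P[Hp Ha Hl]]; exists p; rewrite Hp Hl andbT andTb.
apply/allP => x /(allP Ha); exact: sub.
Qed.

Definition new m : seq (seq nat) :=
  [:: [:: 0; 1; m]; [:: 0; m.+1; m.+2]; [:: m; m.+2; m.+3]; [:: m; m.+1; m.+3]]
  ++ [seq [:: i; m; m.+1] | i <- iota 1 m.-1]
  ++ [seq [:: i; m.+2; m.+3] | i <- iota 0 m].

Fixpoint L n : seq (seq nat) :=
  match n with
  | 0 | 1 | 2 => [::]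
  | 3 => [:: [:: 0; 1; 2]]
  | 4 => [:: [:: 0; 1; 2]; [:: 1; 2; 3]; [:: 0; 2; 3]]
  | 5 => [:: [:: 0; 1; 2]; [:: 1; 2; 3]; [:: 0; 2; 3]; [:: 0; 1; 4]; [:: 2; 3; 4]]
  | m.+4 => L m ++ new m
  end.

Lemma L_step m : 2 <= m -> L m.+4 = L m ++ new m.
Proof. by case: m => [|[|m]]. Qed.

Lemma size_new m : 1 <= m -> size (new m) = 2 * m + 3.
Proof. by move=> Hm; rewrite /new /= !size_cat !size_map !size_iota; lia. Qed.

Lemma bin2S n : 'C(n.+1, 2) = 'C(n, 2) + n.
Proof. by rewrite binS bin1. Qed.

Lemma size_L n : size (L n) = 'C(n, 2) %/ 2.
Proof.
elim/ltn_ind: n => n IH.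
case: n IH => [|[|[|[|[|[|m]]]]]] IH //.
rewrite L_step // size_cat size_new // IH //.
  rewrite !binS !bin1 !bin0; move: ('C(m, 2)) => c; lia.
lia.

Qed.

Ltac deq := repeat match goal with |- context [?a == ?b] =>
  let H := fresh in
  first [ have H : (a == b) = false by apply/eqP; lia
        | have H : (a == b) = true by apply/eqP; lia ];
  rewrite H; clear H
  | |- context [?a <= ?b] =>
  let H := fresh in
  first [ have H : (a <= b) = false by apply/negbTE; rewrite -ltnNge; lia
        | have H : (a <= b) = true by lia ];
  rewrite H; clear H end.

Ltac solve_tr := rewrite /okt /share /= ?inE; deq; rewrite /= ?orbT ?andbT; done.


Definition Inv n := [/\ forall t, t \in L n -> okt n t,
  3 <= n -> [:: 0; 1; 2] \in L n,
  3 <= n -> forall a b, a < n -> b < n -> a != b -> exists2 t, t \in L n & (a \in t) && (b \in t)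
  & forall t, t \in L n -> nlink (L n) t [:: 0; 1; 2]].

Lemma mem_new m t : t \in new m ->
  t = [:: 0; 1; m] \/ t = [:: 0; m.+1; m.+2] \/ t = [:: m; m.+2; m.+3] \/ t = [:: m; m.+1; m.+3] \/
   (exists2 i, 1 <= i < m & t = [:: i; m; m.+1]) \/ (exists2 i, i < m & t = [:: i; m.+2; m.+3]).
Proof.
rewrite /new /= !in_cons mem_cat.
case/orP=> [/eqP->|]; first by left.
case/orP=> [/eqP->|]; first by right; left.
case/orP=> [/eqP->|]; first by right; right; left.
case/orP=> [/eqP->|]; first by do 3 right; left.
case/orP=> /mapP[i]; rewrite mem_iota => Hi ->; do 4 right.
  by left; exists i => //; lia.
by right; exists i => //; lia.
Qed.

Lemma step m : 2 <= m -> Inv m -> Inv m.+4.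
Proof.
move=> Hm [Hok H012 Hcov Hlink]; rewrite /Inv L_step //.
have inR : forall t, t \in new m -> t \in L m ++ new m by move=> t Ht; rewrite mem_cat Ht orbT.
have inl : forall t, t \in L m -> t \in L m ++ new m by move=> t Ht; rewrite mem_cat Ht.
have n0 : [:: 0; 1; m] \in new m by rewrite /new mem_head.
have n3 : [:: 0; m.+1; m.+2] \in new m by rewrite /new /= !in_cons eqxx ?orbT.
have n4 : [:: m; m.+2; m.+3] \in new m by rewrite /new /= !in_cons eqxx ?orbT.
have n5 : [:: m; m.+1; m.+3] \in new m by rewrite /new /= !in_cons eqxx ?orbT.
have n1 : forall i, 1 <= i < m -> [:: i; m; m.+1] \in new m.
  move=> i Hi; rewrite /new /= !in_cons mem_cat; apply/orP; right; apply/orP; right; apply/orP; right.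
  apply/orP; right; apply/orP; left; apply: (map_f (fun i => [:: i; m; m.+1])).
  rewrite mem_iota; lia.
have n2 : forall i, i < m -> [:: i; m.+2; m.+3] \in new m.
  move=> i Hi; rewrite /new /= !in_cons mem_cat; apply/orP; right; apply/orP; right; apply/orP; right.
  apply/orP; right; apply/orP; right; apply: (map_f (fun i => [:: i; m.+2; m.+3])).
  rewrite mem_iota; lia.
split.
- move=> t; rewrite mem_cat => /orP[/Hok|/mem_new].
    rewrite /okt => /andP[-> /allP H]; apply/allP => x /H; lia.
  case=> [->|[->|[->|[->|[[i Hi ->]|[i Hi ->]]]]]]; solve_tr.
- move=> _; case: (leqP 3 m) => Hm3; first by apply: inl; apply: H012.
  have Em : m = 2 by lia.
  by subst m; apply: inR.
- move=> _; move=> a b; wlog Hlt : a b / a < b.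
    move=> W Ha Hb Hab; case: (ltngtP a b) => H; first exact: W.
      by have [t ? ?] := W b a H Hb Ha (ltac:(by rewrite eq_sym)); exists t; rewrite // andbC.
    by rewrite H eqxx in Hab.
  move=> Ha Hb Hab.
  case: (ltnP b m) => Hbm.
    case: (leqP 2 b) => Hb2.
      by have [t ? ?] := Hcov (ltac:(lia)) a b (ltac:(lia)) Hbm Hab; exists t => //; apply: inl.
    have -> : a = 0 by lia.
    have -> : b = 1 by lia.
    by exists [:: 0; 1; m]; [apply: inR|solve_tr].
  have : b = m \/ b = m.+1 \/ b = m.+2 \/ b = m.+3 by lia.
  case=> [Eb|[Eb|[Eb|Eb]]]; subst b.
  + case: (eqVneq a 0) => [->|Ha0].
      by exists [:: 0; 1; m]; [apply: inR|solve_tr].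
    by exists [:: a; m; m.+1]; [apply/inR/n1; lia|solve_tr].
  + case: (eqVneq a m) => [->|Ham].
      by exists [:: m; m.+1; m.+3]; [apply: inR|solve_tr].
    case: (eqVneq a 0) => [->|Ha0].
      by exists [:: 0; m.+1; m.+2]; [apply: inR|solve_tr].
    by exists [:: a; m; m.+1]; [apply/inR/n1; lia|solve_tr].
  + case: (ltnP a m) => Ham.
      by exists [:: a; m.+2; m.+3]; [apply/inR/n2; lia|solve_tr].
    case: (eqVneq a m) => [->|Ham'].
      by exists [:: m; m.+2; m.+3]; [apply: inR|solve_tr].
    have -> : a = m.+1 by lia.
    by exists [:: 0; m.+1; m.+2]; [apply: inR|solve_tr].
  + case: (ltnP a m) => Ham.
      by exists [:: a; m.+2; m.+3]; [apply/inR/n2; lia|solve_tr].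
    case: (eqVneq a m.+1) => [->|Ham'].
      by exists [:: m; m.+1; m.+3]; [apply: inR|solve_tr].
    case: (eqVneq a m) => [->|Ham2].
      by exists [:: m; m.+2; m.+3]; [apply: inR|solve_tr].
    have -> : a = m.+2 by lia.
    by exists [:: m; m.+2; m.+3]; [apply: inR|solve_tr].
- set L' := L m ++ new m.
  have lk0 : nlink L' [:: 0; 1; m] [:: 0; 1; 2].
    case: (leqP 3 m) => Hm3.
      apply: (nlink_step (t := [:: 0; 1; 2]) (inR _ n0)); first by solve_tr.
      by apply/nlink_refl/inl/H012.
    have Em : m = 2 by lia.
    by subst m; apply/nlink_refl/inR.
  have lk1 : nlink L' [:: 1; m; m.+1] [:: 0; 1; 2].
    by apply: (nlink_step (inR _ (n1 1 _))) lk0; [lia|solve_tr].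
  have lkA : forall i, 1 <= i < m -> nlink L' [:: i; m; m.+1] [:: 0; 1; 2].
    move=> i Hi; case: (eqVneq i 1) => [->//|Hi1].
    by apply: (nlink_step (inR _ (n1 i Hi))) lk1; solve_tr.
  have lkB : nlink L' [:: m; m.+1; m.+3] [:: 0; 1; 2].
    by apply: (nlink_step (inR _ n5)) lk1; solve_tr.
  have lkC : nlink L' [:: m; m.+2; m.+3] [:: 0; 1; 2].
    by apply: (nlink_step (inR _ n4)) lkB; solve_tr.
  have lkD : forall i, i < m -> nlink L' [:: i; m.+2; m.+3] [:: 0; 1; 2].
    by move=> i Hi; apply: (nlink_step (inR _ (n2 i Hi))) lkC; solve_tr.
  have lkE : nlink L' [:: 0; m.+1; m.+2] [:: 0; 1; 2].
    by apply: (nlink_step (inR _ n3)) (lkD 0 (ltac:(lia))); solve_tr.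
  move=> t; rewrite mem_cat => /orP[tL|/mem_new].
    exact: (nlink_sub inl (Hlink t tL)).
  by case=> [->|[->|[->|[->|[[i Hi ->]|[i Hi ->]]]]]]; auto.
Qed.

Lemma covb n (Ls : seq (seq nat)) :
  all (fun a => all (fun b => (a == b) || has (fun t => (a \in t) && (b \in t)) Ls) (iota 0 n)) (iota 0 n) ->
  forall a b, a < n -> b < n -> a != b -> exists2 t, t \in Ls & (a \in t) && (b \in t).
Proof.
move=> /allP H a b Ha Hb Hab.
have /allP H1 := H a (ltac:(by rewrite mem_iota)).
have := H1 b (ltac:(by rewrite mem_iota)); rewrite (negbTE Hab) /= => /hasP[t tL Ht].
by exists t.
Qed.

Lemma Inv_all n : Inv n.
Proof.
elim/ltn_ind: n => n IH.
case: n IH => [|[|[|[|[|[|m]]]]]] IH.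
- by split.
- by split.
- by split.
- split; [by apply/allP | by [] | by move=> _; apply: covb |].
  move=> t; rewrite !in_cons orbF => /eqP ->; exact: nlink_refl.
- split; [by apply/allP | by [] | by move=> _; apply: covb |].
  have l0 : nlink (L 4) [:: 0; 1; 2] [:: 0; 1; 2] by exact: nlink_refl.
  have l1 : nlink (L 4) [:: 1; 2; 3] [:: 0; 1; 2] by apply: (nlink_step _ _ l0).
  have l2 : nlink (L 4) [:: 0; 2; 3] [:: 0; 1; 2] by apply: (nlink_step _ _ l1).
  by move=> t; rewrite !in_cons orbF => /orP[/eqP->|/orP[/eqP->|/eqP->]].
- split; [by apply/allP | by [] | by move=> _; apply: covb |].
  have l0 : nlink (L 5) [:: 0; 1; 2] [:: 0; 1; 2] by exact: nlink_refl.
  have l1 : nlink (L 5) [:: 1; 2; 3] [:: 0; 1; 2] by apply: (nlink_step _ _ l0).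
  have l2 : nlink (L 5) [:: 0; 2; 3] [:: 0; 1; 2] by apply: (nlink_step _ _ l1).
  have l3 : nlink (L 5) [:: 0; 1; 4] [:: 0; 1; 2] by apply: (nlink_step _ _ l0).
  have l4 : nlink (L 5) [:: 2; 3; 4] [:: 0; 1; 2] by apply: (nlink_step _ _ l1).
  by move=> t; rewrite !in_cons orbF => /orP[/eqP->|/orP[/eqP->|/orP[/eqP->|/orP[/eqP->|/eqP->]]]].
- by apply: step => //; apply: IH; lia.
Qed.

Definition img n (t : seq nat) : {set 'I_n} := [set i : 'I_n | val i \in t].

Lemma card_img n t : uniq t -> all (fun x => x < n) t -> #|img n t| = size t.
Proof.
move=> Ut At; rewrite cardE -(size_map val); apply: perm_size; apply: uniq_perm => //.
  by rewrite map_inj_uniq ?enum_uniq //; exact: val_inj.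
move=> x; apply/mapP/idP => [[i]|xt].
  by rewrite mem_enum inE => it ->.
have xn : x < n := allP At x xt.
by exists (Ordinal xn); [rewrite mem_enum inE|].
Qed.

Lemma img_cap n a b : img n a :&: img n b = img n [seq x <- a | x \in b].
Proof. by apply/setP => i; rewrite !inE mem_filter andbC. Qed.

Lemma share_img n a b : okt n a -> share a b -> #|img n a :&: img n b| == 2.
Proof.
rewrite /okt => /andP[/andP[Ua _] Aa] Hs; rewrite img_cap card_img ?filter_uniq //.
  by rewrite size_filter.
by apply/allP => x; rewrite mem_filter => /andP[_]; exact: (allP Aa).
Qed.

Definition lk (T : finType) (E : {set {set T}}) (A B : {set T}) :=
  exists p, strong_path E (A :: p) && (last A p == B).

Lemma lk_trans (T : finType) (E : {set {set T}}) A B C : lk E A B -> lk E B C -> lk E A C.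
Proof.
move=> [p /andP[/andP[Ha Hp] /eqP Hl]] [q /andP[/andP[Hb Hq] Hl2]]; exists (p ++ q).
rewrite /strong_path last_cat Hl Hl2 andbT /= cat_path Hl.
move: Ha Hb Hp Hq => /= /andP[-> Ha] /andP[_ Hb] -> ->; by rewrite all_cat Ha Hb.
Qed.

Lemma lk_step (T : finType) (E : {set {set T}}) A B :
  A \in E -> B \in E -> #|A :&: B| == 2 -> lk E A B.
Proof. by move=> AE BE HAB; exists [:: B]; rewrite /strong_path /= AE BE HAB eqxx. Qed.

Lemma lk_rev (T : finType) (E : {set {set T}}) p A :
  strong_path E (A :: p) -> lk E (last A p) A.
Proof.
elim: p A => [|B p IH] A.
  by move=> H; exists [::]; rewrite H eqxx.
rewrite /strong_path /= => /andP[/and3P[AE BE Ha] /andP[HAB Hp]].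
apply: (lk_trans (IH B _)); first by rewrite /strong_path /= BE Ha Hp.
by apply: lk_step => //; rewrite setIC.
Qed.

Lemma lk_sym (T : finType) (E : {set {set T}}) A B : lk E A B -> lk E B A.
Proof. by move=> [p /andP[Hp /eqP <-]]; exact: lk_rev. Qed.

Lemma nlink_lk n Ls s t : (forall u, u \in Ls -> okt n u) -> nlink Ls s t ->
  lk [set A in map (img n) Ls] (img n s) (img n t).
Proof.
move=> Hok [p /and3P[Hp Ha /eqP <-]]; exists (map (img n) p).
rewrite last_map eqxx andbT /strong_path.
have -> : img n s :: map (img n) p = map (img n) (s :: p) by [].
apply/andP; split.
  by rewrite all_map; apply/allP => u /(allP Ha) uL; rewrite /= inE; apply: map_f.
rewrite map_cons /= path_map.
apply: (sub_in_path _ Ha Hp) => x y xL yL /= Hxy.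
exact: share_img (Hok x xL) Hxy.
Qed.

Theorem lemma13 :
  (forall (T : finType) (E : {set {set T}}),
      uniform3 E -> hconnected E -> 'C(#|T|, 2) %/ 2 <= #|E|) /\
  (forall n : nat, exists E : {set {set 'I_n}},
      [/\ uniform3 E, hconnected E & #|E| = 'C(n, 2) %/ 2]).
Proof.
split; first exact: part1.
move=> n; have [Hok H012 Hcov Hlink] := Inv_all n.
set E := [set A in map (img n) (L n)].
have HU : uniform3 E.
  move=> A; rewrite inE => /mapP[t tL ->].
  have := Hok t tL; rewrite /okt => /andP[/andP[Ut /eqP St] At].
  by rewrite card_img // St.
have HC : hconnected E.
  move=> P Q HP HQ PQ.
  case: (leqP 3 n) => Hn; last first.
    have := max_card P; rewrite card_ord HP => h.
    have eqT : forall R : {set 'I_n}, #|R| = 2 -> R = setT.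
      by move=> R HR; apply/eqP; rewrite eqEcard subsetT cardsT card_ord HR; lia.
    by rewrite (eqT P HP) (eqT Q HQ) eqxx in PQ.
  move: HP HQ => /eqP/cards2P[x [y [xy ->]]] /eqP/cards2P[x' [y' [xy' ->]]].
  have [t tL /andP[xt yt]] := Hcov Hn (val x) (val y) (ltn_ord x) (ltn_ord y) (ltac:(by rewrite val_eqE)).
  have [t' t'L /andP[xt' yt']] := Hcov Hn (val x') (val y') (ltn_ord x') (ltn_ord y') (ltac:(by rewrite val_eqE)).
  have l1 := nlink_lk Hok (Hlink t tL).
  have l2 := lk_sym (nlink_lk Hok (Hlink t' t'L)).
  have [p /andP[Hp /eqP Hl]] := lk_trans l1 l2.
  exists (img n t), p; split => //.
    by rewrite subUset !sub1set !inE xt yt.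
  by rewrite Hl subUset !sub1set !inE xt' yt'.
exists E; split => //.
have := part1 HU HC; rewrite card_ord => H1; apply/eqP; rewrite eqn_leq H1 andbT.
rewrite /E cardsE; apply: leq_trans (card_size _) _.
by rewrite size_map size_L.
Qed.
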